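(* In the full-information setting, run Gaptron with gap map $a(\mathbf W_t,\mathbf x_t)=(1-\min\{1,m_t^\star\})^2$, learning rate $\eta=\frac{1}{4KX^2}$, exploration rate $\gamma=0$, and the smooth multiclass hinge loss $$\ell_t(\mathbf W)=\begin{cases}\max\{1-2m_t(\mathbf W,y_t),0\}&\text{if } m_t(\mathbf W,y_t)\le 0,\\ \max\{(1-m_t(\mathbf W,y_t))^2,0\}&\text{if } m_t(\mathbf W,y_t)>0.\end{cases}$$ Then for every $\mathbf U\in\mathcal W$, $$\mathbb E\Big[\sum_{t=1}^T\mathbb 1[y'_t\ne y_t]\Big]\le\sum_{t=1}^T\ell_t(\mathbf U)+2KX^2\|\mathbf U\|^2.$$
   Context: Setting and notation. Fix integers $K\ge 2$, $d\ge1$, $T\ge1$ and reals $X>0$, $D>0$. Matrices $\mathbf W\in\mathbb{R}^{K\times d}$ have rows $\mathbf W^1,\dots,\mathbf W^K\in\mathbb{R}^d$ and are identified with vectors in $\mathbb{R}^{Kd}$; $\langle\cdot,\cdot\rangle$ is the Euclidean inner product and $\|\cdot\|$ the Euclidean (Frobenius) norm. $\mathcal W=\{\mathbf W:\|\mathbf W\|\le D\}$. $\mathbf e_k$ is the $k$-th standard basis vector of $\mathbb R^K$ and $\mathbf 1\in\mathbb R^K$ the all-ones vector. In each round $t=1,\dots,T$ the environment chooses a label $y_t\in\{1,\dots,K\}$ and a feature vector $\mathbf x_t\in\mathbb R^d$ with $\|\mathbf x_t\|\le X$ (possibly depending on the learner's past predictions $y'_1,\dots,y'_{t-1}$ but not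 on its current random draw); the learner sees $\mathbf x_t$, outputs a random label $y'_t$, and then observes $y_t$ (full-information setting) or only $\mathbb 1[y'_t\ne y_t]$ (bandit setting). Gaptron, with learning rate $\eta>0$, exploration rate $\gamma\in[0,1]$, gap map $a:\mathbb R^{K\times d}\times\mathbb R^d\to[0,1]$ and loss functions $\ell_t$: set $\mathbf W_1=\mathbf 0$; for $t=1,\dots,T$: let $y_t^\star=\arg\max_k\langle \mathbf W_t^k,\mathbf x_t\rangle$ (ties broken arbitrarily), $a_t=a(\mathbf W_t,\mathbf x_t)$, $\mathbf p'_t=(1-\max\{a_t,\gamma\})\mathbf e_{y_t^\star}+\max\{a_t,\gamma\}\frac1K\mathbf 1$; draw $y'_t\sim\mathbf p'_t$ ($p'_t(k)$ denotes the probability of label $k$); set $\mathbf g_t=\nabla\ell_t(\mathbf W_t)$; update $\mathbf W_{t+1}=\arg\min_{\mathbf W\in\mathcal W}\ \eta\langle\mathbf g_t,\mathbf W\rangle+\frac12\|\mathbf W-\mathbf W_t\|^2$. $\mathbb E$ denotes expectation over the learner's randomization. Margins: $m_t(\mathbf W,y)=\langle\mathbf W^y,\mathbf x_t\rangle-\max_{k\ne y}\langle\mathbf W^k,\mathbf x_t\rangle$ and $m_t^\star=\max_k m_t(\mathbf W_t,k)$, where $\mathbf W_t$ is Gaptron's current iterate. *)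

(* Defs.v *)
From HB Require Import structures.
From mathcomp Require Import all_boot all_order all_algebra.
From mathcomp Require Import reals.
Set Implicit Arguments. Unset Strict Implicit. Unset Printing Implicit Defensive.
Import Order.TTheory GRing.Theory Num.Theory.
Local Open Scope ring_scope.

Section Gaptron.
Variables (R : realType) (K d : nat).
Local Notation Mat := 'M[R]_(K, d).
Local Notation Vec := 'rV[R]_d.

Definition minner (A B : Mat) : R := \sum_(i < K) \sum_(j < d) A i j * B i j.
Definition mnorm (A : Mat) : R := Num.sqrt (minner A A).
Definition vnorm (x : Vec) : R := Num.sqrt (\sum_(j < d) x 0 j ^+ 2).

Definition score (W : Mat) (x : Vec) (k : 'I_K) : R := \sum_(j < d) W k j * x 0 j.

(* a lower bound for all scores, used only as the neutral start of the
   max over k != y (which is a nonempty index set when K >= 2) *)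
Definition score_lo (W : Mat) (x : Vec) : R := \big[Num.min/0]_(k < K) score W x k.

Definition margin (W : Mat) (x : Vec) (y : 'I_K) : R :=
  score W x y - \big[Num.max/(score_lo W x)]_(k < K | k != y) score W x k.

Definition mstar (W : Mat) (x : Vec) : R :=
  \big[Num.max/(\big[Num.min/0]_(k < K) margin W x k)]_(k < K) margin W x k.

Definition smooth_hinge (W : Mat) (x : Vec) (y : 'I_K) : R :=
  let m := margin W x y in
  if m <= 0 then Num.max (1 - 2 * m) 0 else (Num.max (1 - m) 0) ^+ 2.

(* derivative of the scalar loss as a function of the margin *)
Definition dhinge (m : R) : R := if m <= 0 then -2 else - 2 * Num.max (1 - m) 0.

(* gradient of the smooth hinge at W, where ky is the maximizer of
   <W^k,x> over k <> y used to differentiate the inner max *)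
Definition hinge_grad (W : Mat) (x : Vec) (y ky : 'I_K) : Mat :=
  \matrix_(i < K, j < d)
     (dhinge (margin W x y) * (((i == y)%:R - (i == ky)%:R) * x 0 j)).

Definition gap (W : Mat) (x : Vec) : R := (1 - Num.min 1 (mstar W x)) ^+ 2.

Definition gprob (gamma : R) (pick : Mat -> Vec -> 'I_K) (W : Mat) (x : Vec)
    (k : 'I_K) : R :=
  (1 - Num.max (gap W x) gamma) * (k == pick W x)%:R
  + Num.max (gap W x) gamma / K%:R.

Definition is_proj_step (eta D : R) (step : Mat -> Mat -> Mat) : Prop :=
  forall W g, mnorm (step W g) <= D /\
    forall V, mnorm V <= D ->
      eta * minner g (step W g) + 2^-1 * mnorm (step W g - W) ^+ 2
      <= eta * minner g V + 2^-1 * mnorm (V - W) ^+ 2.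

Variables (adv : seq 'I_K -> 'I_K * Vec)
  (pick : Mat -> Vec -> 'I_K) (sel : Mat -> Vec -> 'I_K -> 'I_K)
  (step : Mat -> Mat -> Mat).

(* Histories of past predictions are stored most recent first.
   adv h = (y_t, x_t) is the environment's choice after the learner's
   predictions h = [y'_{t-1}; ...; y'_1]. *)
Fixpoint Wst (h : seq 'I_K) : Mat :=
  match h with
  | [::] => 0
  | _ :: h' =>
      let W := Wst h' in
      let yx := adv h' in
      step W (hinge_grad W yx.2 yx.1 (sel W yx.2 yx.1))
  end.

Fixpoint Expect (gamma : R) (h : seq 'I_K) (n : nat) (f : seq 'I_K -> R) : R :=
  match n with
  | 0 => f h
  | n'.+1 => \sum_(k < K)
      gprob gamma pick (Wst h) (adv h).2 k * Expect gamma (k :: h) n' f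
  end.

Fixpoint cumul (g : seq 'I_K -> 'I_K -> R) (h : seq 'I_K) : R :=
  match h with
  | [::] => 0
  | k :: h' => g h' k + cumul g h'
  end.

Definition mistakes (h : seq 'I_K) : R :=
  cumul (fun h' k => (k != (adv h').1)%:R) h.

Definition cum_loss (U : Mat) (h : seq 'I_K) : R :=
  cumul (fun h' _ => smooth_hinge U (adv h').2 (adv h').1) h.

End Gaptron.

(* Main.v *)
Require Import Defs.
From HB Require Import structures.
From mathcomp Require Import all_boot all_order all_algebra.
From mathcomp Require Import reals.
From mathcomp Require Import ring lra.
Import Order.TTheory GRing.Theory Num.Theory.
Set Implicit Arguments. Unset Strict Implicit.
Local Open Scope ring_scope.


Section L.
Variables (R : realType) (K d : nat).
Local Notation Mat := 'M[R]_(K, d).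

Lemma minnerC (A B : Mat) : minner A B = minner B A.
Proof. rewrite /minner; apply: eq_bigr => i _; apply: eq_bigr => j _; exact: mulrC. Qed.
Lemma minnerDl (A B C : Mat) : minner (A + B) C = minner A C + minner B C.
Proof. rewrite /minner -big_split /=; apply: eq_bigr => i _; rewrite -big_split /=; apply: eq_bigr => j _; by rewrite !mxE mulrDl. Qed.
Lemma minnerNl (A C : Mat) : minner (- A) C = - minner A C.
Proof. rewrite /minner -sumrN; apply: eq_bigr => i _; rewrite -sumrN; apply: eq_bigr => j _; by rewrite !mxE mulNr. Qed.
Lemma minnerZl s (A C : Mat) : minner (s *: A) C = s * minner A C.
Proof. rewrite /minner mulr_sumr; apply: eq_bigr => i _; rewrite mulr_sumr; apply: eq_bigr => j _; by rewrite !mxE mulrA. Qed.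
Lemma minnerDr (A B C : Mat) : minner C (A + B) = minner C A + minner C B.
Proof. by rewrite minnerC minnerDl !(minnerC C). Qed.
Lemma minnerNr (A C : Mat) : minner C (- A) = - minner C A.
Proof. by rewrite minnerC minnerNl minnerC. Qed.
Lemma minnerZr s (A C : Mat) : minner C (s *: A) = s * minner C A.
Proof. by rewrite minnerC minnerZl minnerC. Qed.
Lemma minner_ge0 (A : Mat) : 0 <= minner A A.
Proof. by apply: sumr_ge0 => i _; apply: sumr_ge0 => j _; rewrite -expr2 sqr_ge0. Qed.
Lemma mnorm_sq (A : Mat) : mnorm A ^+ 2 = minner A A.
Proof. by rewrite /mnorm sqr_sqrtr ?minner_ge0. Qed.
Lemma mnorm_le (A : Mat) D : 0 <= D -> (mnorm A <= D) = (minner A A <= D ^+ 2).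
Proof.
move=> hD; have {1}-> : D = Num.sqrt (D ^+ 2) by rewrite sqrtr_sqr ger0_norm.
by rewrite /mnorm ler_sqrt // sqr_ge0.
Qed.

Lemma ogd eta D step (heta : 0 < eta) (hs : is_proj_step eta D step) (W g U : Mat)
  (hU : mnorm U <= D) :
  eta * minner g (W - U) <= 2^-1 * minner (U - W) (U - W)
    - 2^-1 * minner (U - step W g) (U - step W g) + eta ^+ 2 / 2 * minner g g.
Proof.
have [hW' hmin] := hs W g.
have hD : 0 <= D by apply: le_trans hW'; rewrite /mnorm sqrtr_ge0.
set W' := step W g in hW' hmin *.
set E := W' - W in hmin *; set Dl := U - W'.
have eUW : U - W = E + Dl by rewrite /E /Dl [RHS]addrC -addrA addKr.
have eWU : W - U = - (E + Dl) by rewrite -eUW opprB.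
have hE : E = W' - W by [].
have hDl : Dl = U - W' by [].
clearbody E Dl.
have hc1 : 0 <= eta * minner g Dl + minner E Dl.
  have key : forall s, 0 < s -> s <= 1 ->
      0 <= s * (eta * minner g Dl + minner E Dl) + s ^+ 2 / 2 * minner Dl Dl.
    move=> s s0 s1.
    set V := W' + s *: Dl.
    have hV : mnorm V <= D.
      rewrite mnorm_le //.
      move: hW' hU; rewrite !mnorm_le // => hW' hU.
      have eV : V = (1 - s) *: W' + s *: U.
        by rewrite /V hDl scalerBr scalerBl scale1r addrA addrAC.
      rewrite eV !(minnerDl, minnerDr, minnerZl, minnerZr) (minnerC U W').
      have hDD := minner_ge0 (U - W').
      rewrite !(minnerDl, minnerDr, minnerNl, minnerNr) (minnerC U W') in hDD.
      set a := minner W' W' in hW' hDD *; set b := minner U U in hU hDD *;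
      set c := minner W' U in hDD *.
      have h1 : 0 <= s * (1 - s) by apply: mulr_ge0; lra.
      have h4 := mulr_ge0 h1 hDD.
      have h2 : (1 - s) * a <= (1 - s) * D ^+ 2 by apply: ler_wpM2l; lra.
      have h3 : s * b <= s * D ^+ 2 by apply: ler_wpM2l; lra.
      nra.
    have := hmin V hV; rewrite !mnorm_sq.
    have eVW : V - W = E + s *: Dl by rewrite /V hE addrAC.
    rewrite eVW /V !(minnerDl, minnerDr, minnerZl, minnerZr) (minnerC Dl E).
    move=> h; nra.
  rewrite leNgt; apply/negP => hneg.
  have hc2 := minner_ge0 Dl.
  set c1 := eta * minner g Dl + minner E Dl in key hneg.
  set c2 := minner Dl Dl in key hc2.
  have hden : 0 < c2 - c1 by lra.
  have := key (- c1 / (c2 - c1)).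
  have s0 : 0 < - c1 / (c2 - c1) by apply: divr_gt0; lra.
  have s1 : - c1 / (c2 - c1) <= 1 by rewrite ler_pdivrMr // mul1r; lra.
  move=> /(_ s0 s1).
  set s := - c1 / (c2 - c1).
  have es : s * (c2 - c1) = - c1 by rewrite /s divfK //; lra.
  have es2 : s * c2 = - c1 + s * c1 by rewrite -es; ring.
  have e2 : s ^+ 2 / 2 * c2 = s * (s * c2) / 2 by ring.
  rewrite e2 es2.
  have hsc : s * c1 < 0 by rewrite pmulr_rlt0.
  have hs2 : 0 < s * s by rewrite mulr_gt0.
  have : s * (s * c1) < 0 by rewrite pmulr_rlt0.
  lra.
rewrite eUW eWU.
have hsq := minner_ge0 (eta *: g + E).
rewrite !(minnerDl, minnerDr, minnerZl, minnerZr, minnerNl, minnerNr) (minnerC Dl E) (minnerC E g) in hsq *.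
nra.
Qed.

Lemma sum_delta (y : 'I_K) (F : 'I_K -> R) : \sum_i (i == y)%:R * F i = F y.
Proof.
rewrite (bigD1 y) //= eqxx mul1r big1 ?addr0 // => i /negbTE ->; by rewrite mul0r.
Qed.

Lemma minner_grad (W V : Mat) x (y ky : 'I_K) :
  minner (hinge_grad W x y ky) V =
  dhinge (margin W x y) * (score V x y - score V x ky).
Proof.
rewrite /minner /score.
transitivity (\sum_i dhinge (margin W x y) *
   (((i == y)%:R * \sum_j V i j * x 0 j) - ((i == ky)%:R * \sum_j V i j * x 0 j))).
  apply: eq_bigr => i _; rewrite !mulr_sumr -sumrB mulr_sumr; apply: eq_bigr => j _.
  rewrite mxE; ring.
by rewrite -mulr_sumr sumrB !sum_delta.
Qed.

Lemma minner_grad2 (W : Mat) x (y ky : 'I_K) : ky != y ->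
  minner (hinge_grad W x y ky) (hinge_grad W x y ky) =
  2 * dhinge (margin W x y) ^+ 2 * \sum_j x 0 j ^+ 2.
Proof.
move=> hne; rewrite minner_grad /score.
have e1 : \sum_j hinge_grad W x y ky y j * x 0 j =
   dhinge (margin W x y) * \sum_j x 0 j ^+ 2.
  rewrite mulr_sumr; apply: eq_bigr => j _; rewrite mxE eqxx eq_sym (negbTE hne) /= subr0; ring.
have e2 : \sum_j hinge_grad W x y ky ky j * x 0 j =
   - (dhinge (margin W x y) * \sum_j x 0 j ^+ 2).
  rewrite mulr_sumr -sumrN; apply: eq_bigr => j _; rewrite mxE eqxx (negbTE hne) /= sub0r; ring.
rewrite e1 e2; ring.
Qed.

Lemma bigmax_attain (F : 'I_K -> R) (lo : R) (y k0 : 'I_K) :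
  k0 != y -> lo <= F k0 -> (forall k, k != y -> F k <= F k0) ->
  \big[Num.max/lo]_(k < K | k != y) F k = F k0.
Proof.
move=> h0 hlo hk; apply/le_anti/andP; split.
  by apply: bigmax_le.
exact: (le_bigmax_cond lo F h0).
Qed.

Lemma score_lo_le (W : Mat) x k : score_lo W x <= score W x k.
Proof. exact: bigmin_le. Qed.

Lemma margin_sel (W : Mat) x y k0 : k0 != y ->
  (forall k, k != y -> score W x k <= score W x k0) ->
  margin W x y = score W x y - score W x k0.
Proof.
move=> h0 hk; rewrite /margin (@bigmax_attain (score W x) (score_lo W x) y k0 h0 (score_lo_le _ _ _) hk) //.
Qed.

Lemma margin_le (W : Mat) x y k : k != y ->
  margin W x y <= score W x y - score W x k.
Proof.
move=> hk; rewrite /margin lerD2l lerN2; exact: (le_bigmax_cond (score_lo W x) (score W x) hk).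
Qed.

Lemma margin_ge (W : Mat) x y k : k != y ->
  score W x y - score W x k <= margin W x y -> True.
Proof. by []. Qed.

Lemma margin_upper (W : Mat) x y :
  margin W x y <= score W x y - \big[Num.max/(score_lo W x)]_(k < K | k != y) score W x k.
Proof. by []. Qed.
End L.


Section S.
Variable R : realType.

Definition phi (m : R) : R :=
  if m <= 0 then Num.max (1 - 2 * m) 0 else (Num.max (1 - m) 0) ^+ 2.
Definition dh (m : R) : R := if m <= 0 then -2 else - 2 * Num.max (1 - m) 0.

Lemma max_cases (u : R) : (0 <= u /\ Num.max u 0 = u) \/ (u < 0 /\ Num.max u 0 = 0).
Proof.
case: (lerP 0 u) => h; [left; split=> //; exact: max_l | right; split=> //; apply: max_r; exact: ltW].
Qed.

Lemma phi_convex (a b : R) : phi a + dh a * (b - a) <= phi b.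
Proof.
rewrite /phi /dh.
case: (lerP a 0) => ha; case: (lerP b 0) => hb;
  case: (max_cases (1 - 2 * a)) => -[h1 e1]; case: (max_cases (1 - 2 * b)) => -[h2 e2];
  case: (max_cases (1 - a)) => -[h3 e3]; case: (max_cases (1 - b)) => -[h4 e4];
  rewrite ?e1 ?e2 ?e3 ?e4; have hsq := sqr_ge0 (a - b); rewrite !expr2 in hsq *; try nra.
Qed.

Lemma mist_scalar (iK m ms dl : R) :
  0 < iK -> iK <= 1 -> (dl = 0 \/ dl = 1) ->
  m <= ms -> (m <= 0 -> ms <= - m) -> (0 < m -> dl = 1) -> 0 <= ms ->
  1 - ((1 - Num.max ((1 - Num.min 1 ms) ^+ 2) 0) * dl + Num.max ((1 - Num.min 1 ms) ^+ 2) 0 * iK)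
    + dh m ^+ 2 * iK / 4 <= phi m.
Proof.
move=> iK0 iK1 hdl hm hneg hpos hms0.
have [hc1 hcms hcc] : [/\ Num.min 1 ms <= 1, Num.min 1 ms <= ms &
     Num.min 1 ms = 1 \/ Num.min 1 ms = ms].
  split; [by rewrite ge_min lexx | by rewrite ge_min lexx orbT|].
  case: (lerP 1 ms) => h; [by left | by right].
set c := Num.min 1 ms in hc1 hcms hcc *.
set a := (1 - c) ^+ 2.
have c0 : 0 <= c by case: hcc => ->; lra.
have ha0 : 0 <= a by rewrite /a sqr_ge0.
have ha1 : a <= 1 by rewrite /a; nra.
have -> : Num.max a 0 = a by apply: max_l.
rewrite /phi /dh; case: (lerP m 0) => hm0.
  have h1 : 0 <= 1 - 2 * m by lra.
  rewrite (max_l h1).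
  have hm' := hneg hm0.
  have h2 : 1 - a <= - 2 * m by rewrite /a; nra.
  have h3 : (1 - a) * iK <= 1 - a by nra.
  case: hdl => ->; nra.
rewrite (hpos hm0).
have hq : a <= Num.max (1 - m) 0 ^+ 2.
  case: (max_cases (1 - m)) => -[h ->].
    rewrite /a; case: hcc => hc; nra.
  rewrite /a; case: hcc => hc; nra.
have : (Num.max (1 - m) 0 ^+ 2 - a) * (1 - iK) >= 0 by apply: mulr_ge0; lra.
nra.
Qed.
End S.


Section R2.
Variables (R : realType) (K d : nat).
Local Notation Mat := 'M[R]_(K, d).

Lemma smooth_phi (W : Mat) x y : smooth_hinge W x y = phi (margin W x y).
Proof. by []. Qed.
Lemma dhinge_dh (m : R) : dhinge m = dh m.
Proof. by []. Qed.
Lemma dh_le0 (m : R) : dh m <= 0.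
Proof.
rewrite /dh; case: ifP => _; first lra.
have : 0 <= Num.max (1 - m) 0 by rewrite le_max lexx orbT.
lra.
Qed.

Lemma scoreB (A B : Mat) x k : score (A - B) x k = score A x k - score B x k.
Proof.
rewrite /score -sumrB; apply: eq_bigr => j _; rewrite !mxE; ring.
Qed.

Lemma mstar_ge (W : Mat) x k : margin W x k <= mstar W x.
Proof. exact: le_bigmax. Qed.

Lemma margin_pick_ge0 (W : Mat) x p : (forall k, score W x k <= score W x p) ->
  0 <= margin W x p.
Proof.
move=> hp; rewrite /margin subr_ge0; apply: bigmax_le => //.
exact: score_lo_le.
Qed.

Lemma mstar_neg (W : Mat) x y : margin W x y <= 0 -> mstar W x <= - margin W x y.
Proof.
move=> hm; rewrite /mstar; apply: bigmax_le.
  apply: le_trans (bigmin_le 0 y (margin W x)) _; lra.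
move=> k _; case: (eqVneq k y) => [->|hk]; first lra.
apply: le_trans (@margin_le _ _ _ W x k y _) _; first by rewrite eq_sym.
rewrite /margin opprB lerD2r.
exact: (le_bigmax_cond (score_lo W x) (score W x) hk).
Qed.

Lemma margin_pos_pick (W : Mat) x y p : (forall k, score W x k <= score W x p) ->
  0 < margin W x y -> y = p.
Proof.
move=> hp hm; case: (eqVneq y p) => // hne.
have hne2 : p != y by rewrite eq_sym.
have h2 := @margin_le _ _ _ W x y p hne2.
have h1 := hp y; exfalso; lra.
Qed.


Lemma vnorm_sq (x : 'rV[R]_d) X : vnorm x <= X -> \sum_j x 0 j ^+ 2 <= X ^+ 2.
Proof.
move=> hx.
have hS : 0 <= \sum_j x 0 j ^+ 2 by apply: sumr_ge0 => j _; rewrite sqr_ge0.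
have hX0 : 0 <= X by apply: le_trans hx; rewrite /vnorm sqrtr_ge0.
rewrite -(sqr_sqrtr hS); rewrite -/(vnorm x).
by rewrite ler_pXn2r // ?nnegrE ?sqrtr_ge0.
Qed.

Lemma round (X D : R) (hK : (2 <= K)%N) (hX : 0 < X)
  (pick : Mat -> 'rV[R]_d -> 'I_K)
  (hpick : forall W x k, score W x k <= score W x (pick W x))
  (step : Mat -> Mat -> Mat)
  (hstep : is_proj_step (1 / (4 * K%:R * X ^+ 2)) D step)
  (W : Mat) x (hx : vnorm x <= X) y ky (hky : ky != y)
  (hkymax : forall k, k != y -> score W x k <= score W x ky)
  (U : Mat) (hU : mnorm U <= D) :
  1 - gprob 0 pick W x y - smooth_hinge U x y
   + 2 * K%:R * X ^+ 2 * minner (U - step W (hinge_grad W x y ky)) (U - step W (hinge_grad W x y ky))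
  <= 2 * K%:R * X ^+ 2 * minner (U - W) (U - W).
Proof.
set g := hinge_grad W x y ky.
set W' := step W g.
have hKr : (2%:R : R) <= K%:R by rewrite ler_nat.
have hX2 : 0 < X ^+ 2 by rewrite exprn_gt0.
set eta := 1 / (4 * K%:R * X ^+ 2) in hstep.
have heta : 0 < eta by rewrite /eta divr_gt0 // !mulr_gt0 //; lra.
have hogd := ogd heta hstep W g hU.
rewrite -/W' in hogd.
set A := minner (U - W) (U - W) in hogd *.
set B := minner (U - W') (U - W') in hogd *.
set gg := minner g g in hogd.
set G := minner g (W - U) in hogd.
have hG : G <= 2 * K%:R * X ^+ 2 * A - 2 * K%:R * X ^+ 2 * B + eta / 2 * gg.
  have hK4 : 0 < 4 * K%:R * X ^+ 2 by rewrite !mulr_gt0 //; lra.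
  have := ler_wpM2l (ltW hK4) hogd.
  have -> : 4 * K%:R * X ^+ 2 * (eta * G) = G by rewrite /eta; field; lra.
  have -> : 4 * K%:R * X ^+ 2 * (2^-1 * A - 2^-1 * B + eta ^+ 2 / 2 * gg)
     = 2 * K%:R * X ^+ 2 * A - 2 * K%:R * X ^+ 2 * B + eta / 2 * gg.
    by rewrite /eta; field; lra.
  by [].
set mW := margin W x y.
set mU := margin U x y.
set u := score U x y - score U x ky.
have emW : mW = score W x y - score W x ky by exact: margin_sel.
have hmU : mU <= u by exact: margin_le.
have eG : G = dh mW * (mW - u).
  rewrite /G /g minner_grad !scoreB -/mW dhinge_dh emW /u; ring.
have hconv : phi mW - phi mU <= G.
  have := phi_convex mW mU.
  have := dh_le0 mW.
  rewrite eG; nra.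
have egg : gg = 2 * dh mW ^+ 2 * \sum_j x 0 j ^+ 2 by rewrite /gg minner_grad2.
have hS := vnorm_sq hx.
have hgg : eta / 2 * gg <= dh mW ^+ 2 * K%:R^-1 / 4.
  have hd2 : 0 <= dh mW ^+ 2 by rewrite sqr_ge0.
  have h1 := ler_wpM2l hd2 hS.
  have e1 : eta / 2 * gg = eta * (dh mW ^+ 2 * \sum_j x 0 j ^+ 2) by rewrite egg; field.
  have e2 : dh mW ^+ 2 * K%:R^-1 / 4 = eta * (dh mW ^+ 2 * X ^+ 2).
    by rewrite /eta; field; lra.
  rewrite e1 e2; by rewrite ler_wpM2l // ltW.
have hmist : 1 - gprob 0 pick W x y + dh mW ^+ 2 * K%:R^-1 / 4 <= phi mW.
  rewrite /gprob /gap.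
  have hiK0 : 0 < K%:R^-1 :> R by rewrite invr_gt0; lra.
  have hiK1 : K%:R^-1 <= 1 :> R by rewrite invf_le1; lra.
  have hp0 := margin_pick_ge0 (hpick W x).
  have hms0 : 0 <= mstar W x by apply: le_trans hp0 (mstar_ge W x (pick W x)).
  have := @mist_scalar R (K%:R^-1) mW (mstar W x) ((y == pick W x)%:R) hiK0 hiK1.
  have hdl : ((y == pick W x)%:R = 0 :> R) \/ ((y == pick W x)%:R = 1 :> R).
    by case: (y == pick W x); [right | left].
  move=> /(_ hdl (mstar_ge W x y) (@mstar_neg W x y)).
  have hpos : 0 < mW -> (y == pick W x)%:R = 1 :> R.
    by move=> h; rewrite (margin_pos_pick (hpick W x) h) eqxx.
  move=> /(_ hpos hms0).
  by rewrite mulrC [Num.max _ _ / _]mulrC.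
rewrite smooth_phi -/mU.
lra.
Qed.
End R2.


Lemma gap01 (R : realType) (K d : nat) (pick : 'M[R]_(K, d) -> 'rV[R]_d -> 'I_K)
  (hpick : forall W x k, score W x k <= score W x (pick W x)) (W : 'M[R]_(K, d)) x :
  0 <= gap W x <= 1.
Proof.
have hp0 := margin_pick_ge0 (hpick W x).
have hms0 : 0 <= mstar W x by apply: le_trans hp0 (mstar_ge W x (pick W x)).
rewrite /gap; set c := Num.min 1 (mstar W x).
have hc1 : c <= 1 by rewrite /c ge_min lexx.
have hc0 : 0 <= c by rewrite /c le_min hms0 ler01.
by rewrite sqr_ge0 /=; nra.
Qed.

Lemma gprob_ge0 (R : realType) (K d : nat) (pick : 'M[R]_(K, d) -> 'rV[R]_d -> 'I_K)
  (hpick : forall W x k, score W x k <= score W x (pick W x)) (W : 'M[R]_(K, d)) x k :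
  0 <= gprob 0 pick W x k.
Proof.
have /andP[h0 h1] := gap01 hpick W x.
rewrite /gprob (max_l h0); apply: addr_ge0.
  by apply: mulr_ge0; [lra | case: (k == _)].
by apply: divr_ge0 => //; rewrite ler0n.
Qed.

Lemma gprob_sum (R : realType) (K d : nat) (hK : (0 < K)%N)
  (pick : 'M[R]_(K, d) -> 'rV[R]_d -> 'I_K) (W : 'M[R]_(K, d)) x :
  \sum_k gprob 0 pick W x k = 1.
Proof.
rewrite /gprob big_split /=.
under eq_bigr => k _ do rewrite mulrC.
rewrite sum_delta sumr_const card_ord -(mulr_natr (Num.max (gap W x) 0 / K%:R) K) divfK; first ring.
by rewrite pnatr_eq0 -lt0n.
Qed.

Lemma neq_nat (K : nat) (k y : 'I_K) (R : realType) : (k != y)%:R = 1 - (k == y)%:R :> R.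
Proof. by case: (k == y) => /=; rewrite ?subr0 ?subrr. Qed.

Unset Implicit Arguments. Set Strict Implicit.
Theorem theorem3 (R : realType) (K d T : nat) (X D : R)
  (hK : (2 <= K)%N) (hd : (1 <= d)%N) (hT : (1 <= T)%N)
  (hX : 0 < X) (hD : 0 < D)
  (adv : seq 'I_K -> 'I_K * 'rV[R]_d)
  (hadv : forall h, vnorm (adv h).2 <= X)
  (pick : 'M[R]_(K, d) -> 'rV[R]_d -> 'I_K)
  (hpick : forall W x k, score W x k <= score W x (pick W x))
  (sel : 'M[R]_(K, d) -> 'rV[R]_d -> 'I_K -> 'I_K)
  (hsel : forall W x y, sel W x y != y /\
            forall k, k != y -> score W x k <= score W x (sel W x y))
  (step : 'M[R]_(K, d) -> 'M[R]_(K, d) -> 'M[R]_(K, d))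
  (hstep : is_proj_step (1 / (4 * K%:R * X ^+ 2)) D step)
  (U : 'M[R]_(K, d)) (hU : mnorm U <= D) :
  Expect adv pick sel step 0 [::] T (mistakes adv)
  <= Expect adv pick sel step 0 [::] T (cum_loss adv U)
     + 2 * K%:R * X ^+ 2 * mnorm U ^+ 2.
Proof.
set F := mistakes adv; set G := cum_loss adv U.
set Phi := fun h => 2 * K%:R * X ^+ 2 *
   minner (U - Wst adv sel step h) (U - Wst adv sel step h).
have claim : forall n h, Expect adv pick sel step 0 h n F
    <= Expect adv pick sel step 0 h n G + (F h - G h + Phi h).
  elim=> [|n IH] h /=.
    have : 0 <= Phi h.
      by rewrite /Phi; apply: mulr_ge0; [rewrite !mulr_ge0 // ?exprn_ge0 // ?ltW // ler0n | exact: minner_ge0].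
    lra.
  set W := Wst adv sel step h.
  set x := (adv h).2; set y := (adv h).1.
  set p := gprob 0 pick W x.
  have hp k : 0 <= p k by exact: gprob_ge0.
  set C := fun k : 'I_K => F (k :: h) - G (k :: h) + Phi (k :: h).
  apply: le_trans (_ : \sum_k p k * Expect adv pick sel step 0 (k :: h) n G
      + \sum_k p k * C k <= _).
    by rewrite -big_split; apply: ler_sum => k _ /=; rewrite -mulrDr; apply: ler_wpM2l.
  rewrite lerD2l.
  have [hky hkymax] := hsel W x y.
  have hr := round hK hX hpick hstep (hadv h) hky hkymax hU.
  rewrite -/x -/W -/y in hr.
  have eC : forall k, C k = 1 - (k == y)%:R +
      (F h - G h - smooth_hinge U x y + 2 * K%:R * X ^+ 2 *
        minner (U - step W (hinge_grad W x y (sel W x y)))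
               (U - step W (hinge_grad W x y (sel W x y)))).
    move=> k; rewrite /C /F /G /mistakes /cum_loss /Phi /= -/x -/y -/W neq_nat; ring.
  under eq_bigr => k _ do rewrite eC mulrDr mulrBr mulr1.
  rewrite big_split /= sumrB.
  under [X in _ - X]eq_bigr => k _ do rewrite mulrC.
  rewrite sum_delta -mulr_suml gprob_sum; last by apply: leq_trans hK.
  rewrite /Phi /= -/W -/x -/y mul1r.

  rewrite /p in hr *.
  lra.
have eP : Phi [::] = 2 * K%:R * X ^+ 2 * mnorm U ^+ 2.
  by rewrite /Phi mnorm_sq /= subr0.
have eF : F [::] = 0 by [].
have eG : G [::] = 0 by [].
by have := claim T [::]; rewrite eP eF eG subrr add0r.

Qed.
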